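(* Let $k\geq 2$ and $n>5k^{2}$ be integers. Then \[ n+2k-2-\frac{2(k^{2}-k)}{n+2k+2}>q\left(S_{n,k}^{+}\right)>q\left(S_{n,k}\right)>n+2k-2-\frac{2(k^{2}-k)}{n+2k-3}. \]
   Context: All graphs are finite and simple. For a graph $G$, the signless Laplacian is $Q(G)=D(G)+A(G)$, where $D(G)$ is the diagonal matrix of vertex degrees and $A(G)$ is the adjacency matrix; $q(G)$ denotes the largest eigenvalue of $Q(G)$. $S_{n,k}=K_{k}\vee\overline{K}_{n-k}$ is the graph of order $n$ obtained by joining every vertex of a complete graph on $k$ vertices to every vertex of an independent set of $n-k$ vertices. $S_{n,k}^{+}$ is the graph obtained from $S_{n,k}$ by adding one edge (necessarily joining two vertices of the independent set of size $n-k$). *)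

(* Defs.v *)
From HB Require Import structures.
From mathcomp Require Import all_boot all_order all_algebra.
Set Implicit Arguments. Unset Strict Implicit. Unset Printing Implicit Defensive.
Import Order.TTheory GRing.Theory Num.Theory.
Local Open Scope ring_scope.

(* A simple graph on vertex set 'I_n is given by an adjacency relation
   (assumed symmetric and irreflexive; all relations below are). *)

Definition deg (n : nat) (e : rel 'I_n) (i : 'I_n) : nat := #|[set j | e i j]|.

Definition signless_laplacian (R : nzRingType) (n : nat) (e : rel 'I_n)
  : 'M[R]_n :=
  \matrix_(i, j) ((deg e i)%:R *+ (i == j) + (e i j)%:R).

Definition is_largest_eigenvalue (R : realFieldType) (n : nat) (A : 'M[R]_n)
  (x : R) : Prop :=
  eigenvalue A x /\ (forall y : R, eigenvalue A y -> y <= x).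

(* S_{n,k} = K_k \/ complement(K_{n-k}): vertices 0..k-1 form the clique,
   vertices k..n-1 the independent set. *)
Definition S_adj (n : nat) (k : nat) : rel 'I_n :=
  fun i j => (i != j) && (((i : nat) < k)%N || ((j : nat) < k)%N).

Definition Splus_adj (n k : nat) : rel 'I_n :=
  fun i j => @S_adj n k i j ||
    ((((i : nat) == k) && ((j : nat) == k.+1)) ||
     (((i : nat) == k.+1) && ((j : nat) == k))).
Arguments S_adj n k : clear implicits.
Arguments Splus_adj n k : clear implicits.

(* Main.v *)
From HB Require Import structures.
From mathcomp Require Import all_boot all_order all_algebra.
From mathcomp Require Import ring lra zify.
Import Order.TTheory GRing.Theory Num.Theory.
Local Open Scope ring_scope.
Require Import Defs.

Lemma perron_bound (R : realFieldType) n (A : 'M[R]_n) (x : 'rV[R]_n) q y :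
  (forall i j, 0 <= A i j) -> (forall i, 0 < x 0 i) -> x *m A = q *: x ->
  eigenvalue A y -> y <= q.
Proof.
move=> A0 x0 hx /eigenvalueP [v hv vn0].
have [i1 vi1] : exists i, v 0 i != 0.
  apply/existsP; apply: contraR vn0; rewrite negb_exists => /forallP H.
  by apply/eqP/rowP => i; rewrite mxE; move: (H i); rewrite negbK => /eqP.
pose F i := `|v 0 i| / x 0 i.
have [j _ Hj] := @arg_maxP _ _ _ i1 xpredT F isT.
set c := F j in Hj.
have Fge i : `|v 0 i| <= c * x 0 i.
  have := Hj i isT; rewrite /= /F ler_pdivrMr // mulrC.
have cpos : 0 < c.
  apply: lt_le_trans (Hj i1 isT); rewrite /F divr_gt0 ?normr_gt0 //.
have vj : `|v 0 j| = c * x 0 j by rewrite /c /F mulrVK // unitfE gt_eqF.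
have ej : y * v 0 j = \sum_i v 0 i * A i j.
  by have := congr1 (fun M : 'M[R]_(1,n) => M 0 j) hv; rewrite !mxE => <-.
have exj : \sum_i x 0 i * A i j = q * x 0 j.
  by have := congr1 (fun M : 'M[R]_(1,n) => M 0 j) hx; rewrite !mxE.
have : `|y| * (c * x 0 j) <= q * (c * x 0 j).
  rewrite -vj -normrM ej.
  apply: le_trans (ler_norm_sum _ _ _) _.
  apply: (@le_trans _ _ (\sum_i c * x 0 i * A i j)).
    apply: ler_sum => i' _; rewrite normrM (ger0_norm (A0 _ _)).
    by apply: ler_wpM2r; [exact: A0 | exact: Fge].
  rewrite (eq_bigr (fun i => c * (x 0 i * A i j))); last by move=> i' _; rewrite mulrA.
  by rewrite -mulr_sumr exj mulrCA vj.
move=> H; have Hp : 0 < c * x 0 j := mulr_gt0 cpos (x0 j); rewrite ler_pM2r // in H.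
exact: le_trans (ler_norm y) H.
Qed.

Lemma deg_sum (R : nzRingType) n (e : rel 'I_n) j :
  (deg e j)%:R = \sum_i (e j i)%:R :> R.
Proof.
rewrite /deg -sum1_card natr_sum big_mkcond; apply: eq_bigr => i _.
by rewrite inE; case: (e j i).
Qed.

Lemma Qentry (R : realFieldType) n (e : rel 'I_n) (X : nat -> R) j :
  (forall i j, e i j = e j i) ->
  ((\row_(i < n) X i) *m signless_laplacian R e) 0 j
    = \sum_(i < n) (X j + X i) * (e i j)%:R.
Proof.
move=> esym; rewrite mxE.
rewrite (eq_bigr (fun i : 'I_n => (X i * (deg e i)%:R) *+ (i == j) + X i * (e i j)%:R));
  last by move=> i _; rewrite !mxE mulrDr -mulrnAr.
rewrite big_split /= (bigD1 j) //= eqxx big1 ?addr0; last first.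
  by move=> i /negbTE ->; rewrite mulr0n.
rewrite deg_sum mulr_sumr -big_split /=; apply: eq_bigr => i _.
by rewrite esym mulrDl.
Qed.

Lemma piece (R : nzRingType) (G : nat -> R) a b c : (a <= b)%N ->
  (forall i, (a <= i < b)%N -> G i = c) -> \sum_(a <= i < b) G i = c * (b%:R - a%:R).
Proof.
move=> ab H; by rewrite (eq_big_nat _ _ H) sumr_const_nat -natrB // mulr_natr.
Qed.

Ltac bs := repeat match goal with
  | |- context [ leq ?x ?y ] => first [ have -> : leq x y = true by lia | have -> : leq x y = false by lia ]
  | |- context [ (?x == ?y :> nat) ] => first [ have -> : (x == y) = true by lia | have -> : (x == y) = false by lia ]
  end.

Definition SE (k i j : nat) := (i != j) && ((i < k)%N || (j < k)%N).

Lemma S_vec (R : realFieldType) n k (q : R) : (k < n)%N -> q != k%:R ->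
  (q - (n%:R + k%:R - 2)) * (q - k%:R) = k%:R * (n%:R - k%:R) ->
  let X := fun i : nat => if (i < k)%N then 1 else k%:R / (q - k%:R) in
  (\row_(i < n) X i) *m signless_laplacian R (S_adj n k) = q *: \row_(i < n) X i.
Proof.
move=> kn qk Pq X; apply/rowP => j.
rewrite Qentry; last by move=> i j'; rewrite /S_adj eq_sym orbC.
rewrite !mxE.
rewrite (eq_bigr (fun i : 'I_n => (X j + X i) * (SE k i j)%:R)) //.
rewrite -(big_mkord xpredT (fun i => (X j + X i) * (SE k i j)%:R)).
have jn := ltn_ord j.
have [jk|jk] := ltnP j k.
  rewrite (@big_cat_nat _ _ _ j 0 n); [|lia|lia].
  rewrite (@big_cat_nat _ _ _ j.+1 j n); [|lia|lia].
  rewrite (@big_cat_nat _ _ _ k j.+1 n); [|lia|lia].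
  rewrite big_nat1.
  rewrite (@piece _ _ 0 j 2); [|lia|move=> i /andP[h1 h2]; rewrite /X /SE; bs => /=; ring].
  rewrite (@piece _ _ j.+1 k 2); [|lia|move=> i /andP[h1 h2]; rewrite /X /SE; bs => /=; ring].
  rewrite (@piece _ _ k n (1 + k%:R / (q - k%:R))); [|lia|move=> i /andP[h1 h2]; rewrite /X /SE; bs => /=; ring].
  rewrite /X /SE; bs => /=.
  have hq : q - k%:R != 0 by rewrite subr_eq0.
  rewrite -[j.+1]addn1 natrD ?mulr0 ?subr0 ?add0r ?addr0 ?mulr1.
  apply/eqP; rewrite -subr_eq0; apply/eqP.
transitivity ((k%:R * (n%:R - k%:R) - (q - (n%:R + k%:R - 2)) * (q - k%:R)) / (q - k%:R)); first by field.
  by rewrite Pq subrr mul0r.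
rewrite (@big_cat_nat _ _ _ k 0 n); [|lia|lia].
rewrite (@piece _ _ 0 k (k%:R / (q - k%:R) + 1)); [|lia|move=> i /andP[h1 h2]; rewrite /X /SE; bs => /=; ring].
rewrite (@piece _ _ k n 0); [|lia|move=> i /andP[h1 h2]; rewrite /X /SE; bs => /=; rewrite ?andbF /=; ring].
rewrite /X; bs => /=.
have hq : q - k%:R != 0 by rewrite subr_eq0.
by field.
Qed.

Definition PE (k i j : nat) := SE k i j ||
  (((i == k) && (j == k.+1)) || ((i == k.+1) && (j == k))).

Ltac pc := let i := fresh "i" in let h1 := fresh "h" in let h2 := fresh "h" in
  move=> i /andP[h1 h2]; (try match goal with Y := _ : nat -> _ |- _ => unfold Y end); rewrite /PE /SE; bs => /=; rewrite ?andbF ?andFb ?orbF ?orFb /=; ring.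

Lemma P_vec (R : realFieldType) n k (q : R) : (k.+2 < n)%N ->
  q != k%:R -> q != k%:R + 2 ->
  (q - k%:R - 2) * ((q - (n%:R + k%:R - 2)) * (q - k%:R) - k%:R * (n%:R - k%:R)) = 4 * k%:R ->
  let X := fun i : nat => if (i < k)%N then 1 else if (i < k.+2)%N then k%:R / (q - k%:R - 2)
     else k%:R / (q - k%:R) in
  (\row_(i < n) X i) *m signless_laplacian R (Splus_adj n k) = q *: \row_(i < n) X i.
Proof.
move=> kn qk qk2 Pq X; apply/rowP => j.
rewrite Qentry; last first.
  move=> i j'; rewrite /Splus_adj /S_adj eq_sym [((i : nat) < k)%N || _]orbC.
  by rewrite [((j' : nat) == k) && _]andbC [((j' : nat) == k.+1) && _]andbC [X in _ || X]orbC.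
rewrite !mxE.
rewrite (eq_bigr (fun i : 'I_n => (X j + X i) * (PE k i j)%:R)) //.
rewrite -(big_mkord xpredT (fun i => (X j + X i) * (PE k i j)%:R)).
have jn := ltn_ord j.
have hu : q - k%:R - 2 != 0 by rewrite -addrA -opprD subr_eq0.
have hv : q - k%:R != 0 by rewrite subr_eq0.
have [jk|jk] := ltnP j k.
  rewrite (@big_cat_nat _ _ _ j 0 n); [|lia|lia].
  rewrite (@big_cat_nat _ _ _ j.+1 j n); [|lia|lia].
  rewrite (@big_cat_nat _ _ _ k j.+1 n); [|lia|lia].
  rewrite (@big_cat_nat _ _ _ k.+2 k n); [|lia|lia].
  rewrite big_nat1.
  rewrite (@piece _ _ 0 j 2); [|lia|pc].
  rewrite (@piece _ _ j.+1 k 2); [|lia|pc].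
  rewrite (@piece _ _ k k.+2 (1 + k%:R / (q - k%:R - 2))); [|lia|pc].
  rewrite (@piece _ _ k.+2 n (1 + k%:R / (q - k%:R))); [|lia|pc].
  rewrite /X /PE /SE; bs => /=.
  rewrite -[j.+1]addn1 -[k.+2]addn2 !natrD.
  apply/eqP; rewrite -subr_eq0; apply/eqP.
  transitivity ((4 * k%:R - (q - k%:R - 2) * ((q - (n%:R + k%:R - 2)) * (q - k%:R) - k%:R * (n%:R - k%:R))) / ((q - k%:R - 2) * (q - k%:R))); first by field; rewrite hv hu.
  by rewrite -[in 4 * _]Pq subrr mul0r.
have [jk2|jk2] := ltnP j k.+2.
  rewrite (@big_cat_nat _ _ _ k 0 n); [|lia|lia].
  rewrite (@big_cat_nat _ _ _ k.+1 k n); [|lia|lia].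
  rewrite (@big_cat_nat _ _ _ k.+2 k.+1 n); [|lia|lia].
  rewrite !big_nat1.
  have : (j : nat) = k \/ (j : nat) = k.+1 by lia.
  case=> jE.
    rewrite (@piece _ _ 0 k (k%:R / (q - k%:R - 2) + 1)); [|lia|pc].
    rewrite (@piece _ _ k.+2 n 0); [|lia|pc].
    rewrite /X /PE /SE; bs => /=.
    by field.
  rewrite (@piece _ _ 0 k (k%:R / (q - k%:R - 2) + 1)); [|lia|pc].
  rewrite (@piece _ _ k.+2 n 0); [|lia|pc].
  rewrite /X /PE /SE; bs => /=.
  by field.
rewrite (@big_cat_nat _ _ _ k 0 n); [|lia|lia].
rewrite (@piece _ _ 0 k (k%:R / (q - k%:R) + 1)); [|lia|pc].
rewrite (@piece _ _ k n 0); [|lia|pc].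
rewrite /X; bs => /=.
by field.
Qed.

Lemma real_facts (R : realFieldType) (N K : R) : 2 <= K -> 5 * K ^+ 2 + 1 <= N ->
  let L := N + 2 * K - 2 - 2 * (K ^+ 2 - K) / (N + 2 * K - 3) in
  let U := N + 2 * K - 2 - 2 * (K ^+ 2 - K) / (N + 2 * K + 2) in
  let P := fun x => (x - (N + K - 2)) * (x - K) - K * (N - K) in
  [/\ L < U, K + 2 < L, P L < 0, 0 < P U & 0 < (U - K - 2) * P U - 4 * K].
Proof.
move=> K2 NK L U P.
have K4 : 4 <= K ^+ 2 by rewrite expr2; nra.
have N21 : 21 <= N by lra.
set m := 2 * (K ^+ 2 - K).
have m0 : 0 < m by rewrite /m; nra.
have d1 : 0 < N + 2 * K - 3 by lra.
have d2 : 0 < N + 2 * K + 2 by lra.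
have mlt : m < N + 2 * K - 3 by rewrite /m; lra.
set t := m / (N + 2 * K - 3).
set u := m / (N + 2 * K + 2).
have ht : t * (N + 2 * K - 3) = m by rewrite /t mulfVK // gt_eqF.
have hu : u * (N + 2 * K + 2) = m by rewrite /u mulfVK // gt_eqF.
have t0 : 0 < t by rewrite /t divr_gt0.
have u0 : 0 < u by rewrite /u divr_gt0.
have t1 : t < 1 by rewrite /t ltr_pdivrMr // mul1r.
have ut : u < t by rewrite /u /t ltr_pM2l // ltf_pV2 ?posrE //; lra.
have Ld : L = N + 2 * K - 2 - t by [].
have Ud : U = N + 2 * K - 2 - u by [].
have PL : P L = t ^+ 2 - t + (m - t * (N + 2 * K - 3)) by rewrite /P /= Ld /m; ring.
have PU : P U = u ^+ 2 + 4 * u + (m - u * (N + 2 * K + 2)) by rewrite /P /= Ud /m; ring.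
rewrite ht subrr addr0 in PL.
rewrite hu subrr addr0 in PU.
have key : K < u * (N + K - 5).
  have m2K : 2 * K <= m by rewrite /m expr2; nra.
  have h1 : 2 * K * (N + K - 5) <= m * (N + K - 5) by apply: ler_wpM2r; lra.
  have h2 : K * (N + 2 * K + 2) < 2 * K * (N + K - 5) by nra.
  have : K * (N + 2 * K + 2) < m * (N + K - 5) by lra.
  rewrite -hu => H; nra.
split.
- rewrite Ld Ud; lra.
- rewrite Ld; lra.
- rewrite PL; nra.
- rewrite PU; nra.
- rewrite PU Ud; nra.
Qed.

Lemma largest_of_pos (R : realFieldType) n (A : 'M[R]_n) (X : nat -> R) q :
  (0 < n)%N -> (forall i j, 0 <= A i j) -> (forall i, 0 < X i) ->
  (\row_(i < n) X i) *m A = q *: \row_(i < n) X i -> is_largest_eigenvalue A q.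
Proof.
move=> n0 A0 X0 hx; split.
  apply/eigenvalueP; exists (\row_(i < n) X i) => //.
  apply/negP => /eqP h.
  have := congr1 (fun M : 'M[R]_(1,n) => M 0 (Ordinal n0)) h; rewrite !mxE => h'.
  by have := X0 0%N; rewrite h' ltxx.
move=> y; apply: perron_bound hx => //.
by move=> i; rewrite mxE.
Qed.

Lemma Q_ge0 (R : realFieldType) n (e : rel 'I_n) i j :
  0 <= signless_laplacian R e i j.
Proof. by rewrite mxE addr_ge0 ?mulrn_wge0 ?ler0n. Qed.

Theorem proposition1 (R : rcfType) (n k : nat) :
  (2 <= k)%N -> (5 * k ^ 2 < n)%N ->
  exists qplus q : R,
    is_largest_eigenvalue (signless_laplacian R (Splus_adj n k)) qplus /\
    is_largest_eigenvalue (signless_laplacian R (S_adj n k)) q /\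
    n%:R + 2 * k%:R - 2 - 2 * (k%:R ^+ 2 - k%:R) / (n%:R + 2 * k%:R + 2) > qplus /\
    qplus > q /\
    q > n%:R + 2 * k%:R - 2 - 2 * (k%:R ^+ 2 - k%:R) / (n%:R + 2 * k%:R - 3).
Proof.
move=> k2 nk.
have kn : (k.+2 < n)%N by nia.
have kn' : (k < n)%N by lia.
have n0 : (0 < n)%N by lia.
have K2 : 2 <= k%:R :> R by rewrite (ler_nat R 2 k).
have NK : 5 * (k%:R : R) ^+ 2 + 1 <= n%:R.
  have : ((5 * k ^ 2).+1)%:R <= n%:R :> R by rewrite ler_nat.
  by rewrite -addn1 natrD natrM natrX.
have [LU KL PL PU PPU] := @real_facts R _ _ K2 NK.
set N := (n%:R : R) in LU KL PL PU PPU *.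
set K := (k%:R : R) in K2 NK LU KL PL PU PPU *.
set L := N + 2 * K - 2 - _ / _ in LU KL PL PU PPU *.
set U := N + 2 * K - 2 - _ / (N + 2 * K + 2) in LU KL PL PU PPU *.
pose p : {poly R} := ('X - (N + K - 2)%:P) * ('X - K%:P) - (K * (N - K))%:P.
have pE x : p.[x] = (x - (N + K - 2)) * (x - K) - K * (N - K).
  by rewrite /p !hornerE.
pose pp : {poly R} := ('X - (K + 2)%:P) * p - (4 * K)%:P.
have ppE x : pp.[x] = (x - K - 2) * p.[x] - 4 * K.
  rewrite /pp hornerD hornerN hornerC hornerM hornerXsubC; congr (_ * _ - _); ring.
have [q /andP[Lq qU] rq] : exists2 x, L <= x <= U & root p x.
  by apply: poly_ivt; [exact: ltW | rewrite !pE; apply/andP; split; apply: ltW].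
have pq : p.[q] = 0 by apply/eqP.
have Lq' : L < q.
  rewrite lt_neqAle Lq andbT; apply/negP => /eqP E.
  by move: PL; rewrite E -pE pq ltxx.
have qU' : q < U.
  rewrite lt_neqAle qU andbT; apply/negP => /eqP E.
  by move: PU; rewrite -E -pE pq ltxx.
have ppq : pp.[q] < 0 by rewrite ppE pq mulr0 sub0r oppr_lt0; lra.
have ppU : 0 < pp.[U] by rewrite ppE pE.
have [qp /andP[qqp qpU] rqp] : exists2 x, q <= x <= U & root pp x.
  by apply: poly_ivt; [exact: ltW | apply/andP; split; apply: ltW].
have ppqp : pp.[qp] = 0 by apply/eqP.
have qqp' : q < qp.
  rewrite lt_neqAle qqp andbT; apply/negP => /eqP E.
  by move: ppq; rewrite E ppqp ltxx.
have qpU' : qp < U.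
  rewrite lt_neqAle qpU andbT; apply/negP => /eqP E.
  by move: ppU; rewrite -E ppqp ltxx.
have qK2 : K + 2 < q by apply: lt_trans KL Lq'.
have qpK2 : K + 2 < qp by apply: lt_trans qK2 qqp'.
have K0 : 0 < K by apply: lt_le_trans K2.
have qK2' : 0 < q - K - 2 by clear -qK2; lra.
have qpK2' : 0 < qp - K - 2 by clear -qpK2; lra.
have qK' : 0 < q - K by clear -qK2; lra.
have qpK' : 0 < qp - K by clear -qpK2; lra.
exists qp, q; split; [|split; [|split; [exact: qpU'|split; [exact: qqp'|exact: Lq']]]].
- apply: (@largest_of_pos _ _ _ (fun i : nat => if (i < k)%N then 1 else if (i < k.+2)%N then K / (qp - K - 2)
     else K / (qp - K))).
  + exact: n0.
  + exact: Q_ge0.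
  + move=> i; case: ifP => _; first exact: ltr01.
    by case: ifP => _; apply: divr_gt0.
  + apply: P_vec => //.
    * by rewrite gt_eqF // -subr_gt0.
    * by rewrite gt_eqF // -subr_gt0 opprD addrA.
    * by have := ppqp; rewrite ppE pE => /eqP; rewrite subr_eq0 => /eqP.
- apply: (@largest_of_pos _ _ _ (fun i : nat => if (i < k)%N then 1 else K / (q - K))).
  + exact: n0.
  + exact: Q_ge0.
  + move=> i; case: ifP => _; first exact: ltr01.
    exact: divr_gt0.
  + apply: S_vec => //.
    * by rewrite gt_eqF // -subr_gt0.
    * by have := pq; rewrite pE => /eqP; rewrite subr_eq0 => /eqP.
Qed.
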